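(* Let $d\ge1$ and let $\Phi$ be a Young function such that the limits $\lim_{t\to0^+}\frac{t\Phi'(t)}{\Phi(t)}$ and $\lim_{t\to\infty}\frac{t\Phi'(t)}{\Phi(t)}$ exist. If $1<q_{[\Phi]}\le p_{[\Phi]}<\infty$, then $$L^p(\mathbb R^d)\cap L^q(\mathbb R^d)\subseteq L^\Phi(\mathbb R^d)\subseteq L^p(\mathbb R^d)+L^q(\mathbb R^d)$$ for all $p\in(p_{[\Phi]},\infty)$ and $q\in(1,q_{[\Phi]})$.
   Context: A Young function is a convex function $\Phi:[0,\infty)\to[0,\infty)$ with $\Phi(0)=0$, $\Phi(t)>0$ for $t>0$, and $\lim_{t\to\infty}\Phi(t)=\infty$. $\Phi'$ denotes the right derivative of $\Phi$. The Lebesgue exponents of $\Phi$ are $p_\Phi=\sup_{t>0}\frac{t\Phi'(t)}{\Phi(t)}$ and $q_\Phi=\inf_{t>0}\frac{t\Phi'(t)}{\Phi(t)}$. Two Young functions $\Phi,\Psi$ are equivalent if there is $C\ge1$ with $C^{-1}\Psi(t)\le\Phi(t)\le C\Psi(t)$ for all $t\ge0$; $[\Phi]$ denotes the set of Young functions equivalent to $\Phi$, and $p_{[\Phi]}=\inf\{p_\Psi:\Psi\in[\Phi]\}$, $q_{[\Phi]}=\sup\{q_\Psi:\Psi\in[\Phi]\}$. For a measurable $f$ on $\mathbb R^d$, $\rho_\Phi(f)=\int_{\mathbb R^d}\Phi(|f(x)|)\,dx$, the Luxemburg norm is $\|f\|_{L^\Phi}=\inf\{\lambda>0:\rho_\Phi(f/\lambda)\le1\}$,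 and the Orlicz space $L^\Phi(\mathbb R^d)$ consists of (classes of) measurable $f$ with $\|f\|_{L^\Phi}<\infty$. $L^p+L^q$ is the set of sums $g+h$ with $g\in L^p$, $h\in L^q$. *)

(* Defs.v *)
From HB Require Import structures.
From mathcomp Require Import all_boot all_order all_algebra.
From mathcomp Require Import all_classical all_reals all_analysis.
Set Implicit Arguments. Unset Strict Implicit. Unset Printing Implicit Defensive.
Import Order.TTheory GRing.Theory Num.Theory.
Import numFieldNormedType.Exports.
Local Open Scope classical_set_scope.
Local Open Scope ring_scope.

(* Sigma-finiteness of the product of two sigma-finite measures (the library
   proves it but its instance is shadowed by another canonical instance). *)
Section prodsf.
Local Open Scope ereal_scope.
Context d1 d2 (T1 : measurableType d1) (T2 : measurableType d2) (R : realType).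
Variable m1 : {sigma_finite_measure set T1 -> \bar R}.
Variable m2 : {sigma_finite_measure set T2 -> \bar R}.

Lemma product_measure1_sigma_finite : sigma_finite setT (m1 \x m2).
Proof.
have /sigma_finiteP[F [TF ndF Foo]] := sigma_finiteT m1.
have /sigma_finiteP[G [TG ndG Goo]] := sigma_finiteT m2.
exists (fun n => F n `*` G n).
  rewrite -setXTT TF TG predeqE => -[x y]; split.
    move=> [/= [n _ Fnx] [k _ Gky]]; exists (maxn n k) => //; split.
    - by move: x Fnx; exact/subsetPset/ndF/leq_maxl.
    - by move: y Gky; exact/subsetPset/ndG/leq_maxr.
  by move=> [n _ []/= ? ?]; split; exists n.
move=> k; have [? ?] := Foo k; have [? ?] := Goo k.
split; first exact: measurableX.
by rewrite product_measure1E// lte_mul_pinfty// ge0_fin_numE.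
Qed.

Definition sf_prod : {sigma_finite_measure set (T1 * T2)%type -> \bar R} :=
  HB.pack (m1 \x m2)%E
    (Measure_isSigmaFinite.Build _ _ _ (m1 \x m2)%E product_measure1_sigma_finite).
End prodsf.

Record mspace (R : realType) := MSpace {
  ms_disp : measure_display;
  ms_type : measurableType ms_disp;
  ms_meas : {sigma_finite_measure set ms_type -> \bar R} }.

(* lebRd R n = (R^(n+1), Borel sets, Lebesgue measure), built as the
   iterated product R * (R * ( ... * R)) of the Lebesgue measure on R. *)
Fixpoint lebRd (R : realType) (n : nat) : mspace R :=
  match n with
  | 0 => @MSpace R _ (measurableTypeR R) (@lebesgue_measure R)
  | n'.+1 => let S := lebRd R n' in
      @MSpace R _ (measurableTypeR R * ms_type S)%type
        (sf_prod (@lebesgue_measure R) (ms_meas S))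
  end.

Definition Rd (R : realType) (d : nat) : Type := ms_type (lebRd R d.-1).
Definition lebd (R : realType) (d : nat) : set (Rd R d) -> \bar R :=
  ms_meas (lebRd R d.-1).

Definition young_function (R : realType) (Phi : R -> R) : Prop :=
  [/\ (forall x y l : R, 0 <= x -> 0 <= y -> 0 <= l <= 1 ->
         Phi (l * x + (1 - l) * y) <= l * Phi x + (1 - l) * Phi y),
      (forall t : R, 0 <= t -> 0 <= Phi t),
      Phi 0 = 0,
      (forall t : R, 0 < t -> 0 < Phi t) &
      Phi t @[t --> +oo] --> +oo].

Definition rderiv (R : realType) (Phi : R -> R) (t : R) : R :=
  lim ((Phi (t + h) - Phi t) / h @[h --> 0^'+]).

Definition young_ratio (R : realType) (Phi : R -> R) (t : R) : R :=
  t * rderiv Phi t / Phi t.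

Definition p_exp (R : realType) (Phi : R -> R) : \bar R :=
  ereal_sup [set (young_ratio Phi t)%:E | t in [set t : R | 0 < t]].
Definition q_exp (R : realType) (Phi : R -> R) : \bar R :=
  ereal_inf [set (young_ratio Phi t)%:E | t in [set t : R | 0 < t]].

Definition young_equiv (R : realType) (Phi Psi : R -> R) : Prop :=
  exists C : R, 1 <= C /\
    forall t : R, 0 <= t -> C^-1 * Psi t <= Phi t /\ Phi t <= C * Psi t.

Definition young_class (R : realType) (Phi : R -> R) : set (R -> R) :=
  [set Psi | young_function Psi /\ young_equiv Phi Psi].

Definition p_class (R : realType) (Phi : R -> R) : \bar R :=
  ereal_inf [set p_exp Psi | Psi in young_class Phi].
Definition q_class (R : realType) (Phi : R -> R) : \bar R :=
  ereal_sup [set q_exp Psi | Psi in young_class Phi].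

Section spaces.
Context (R : realType) (disp : measure_display) (T : measurableType disp).
Variable mu : set T -> \bar R.

Definition modular (Phi : R -> R) (f : T -> R) : \bar R :=
  (\int[mu]_x (Phi `|f x|)%:E)%E.

Definition luxemburg_norm (Phi : R -> R) (f : T -> R) : \bar R :=
  ereal_inf [set lam%:E | lam in
    [set lam : R | 0 < lam /\ (modular Phi (fun x => (f x / lam)%R) <= 1)%E]].

Definition orlicz_space (Phi : R -> R) : set (T -> R) :=
  [set f : T -> R | measurable_fun setT f /\ (luxemburg_norm Phi f < +oo)%E].

Definition Lp_space (p : R) : set (T -> R) :=
  [set f : T -> R | measurable_fun setT f /\ (\int[mu]_x (`|f x| `^ p)%:E < +oo)%E].

(* L^p + L^q (equality of functions up to a mu-null set, as classes) *)
Definition Lp_sum (p q : R) : set (T -> R) :=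
  [set f : T -> R | exists g h, Lp_space p g /\ Lp_space q h /\
     {ae mu, forall x, f x = g x + h x}].
End spaces.

(* Main.v *)
Require Import Defs.
From HB Require Import structures.
From mathcomp Require Import all_boot all_order all_algebra.
From mathcomp Require Import all_classical all_reals all_analysis.
From mathcomp Require Import ring lra.
Import Order.TTheory GRing.Theory Num.Theory.
Import numFieldNormedType.Exports.
Local Open Scope classical_set_scope.
Local Open Scope ring_scope.
From mathcomp Require Import measurable_realfun.
Section A.
Context (R : realType) (Phi : R -> R).
Hypothesis cvx : forall x y l : R, 0 <= x -> 0 <= y -> 0 <= l <= 1 ->
         Phi (l * x + (1 - l) * y) <= l * Phi x + (1 - l) * Phi y.

Lemma cvx3 s t u : 0 <= s -> s < t -> t < u ->
  (Phi t - Phi s) * (u - t) <= (Phi u - Phi t) * (t - s).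
Proof.
move=> s0 st tu.
have us : 0 < u - s by lra.
set l := (u - t) / (u - s).
have l0 : 0 <= l by rewrite /l divr_ge0 //; lra.
have l1 : l <= 1 by rewrite /l ler_pdivrMr //; lra.
have e1 : u - t = l * (u - s) by rewrite /l mulfVK //; lra.
have e2 : t - s = (1 - l) * (u - s) by rewrite mulrBl mul1r -e1; lra.
have ht : l * s + (1 - l) * u = t.
  have -> : l * s + (1 - l) * u = u - l * (u - s) by ring.
  by rewrite -e1; ring.
have u0 : 0 <= u by lra.
have := @cvx s u l s0 u0 (ltac:(apply/andP; split; eauto)) .
rewrite ht => H.
rewrite e1 e2; nra.
Qed.
End A.
Section A2.
Context (R : realType) (Phi : R -> R).
Hypothesis cvx : forall x y l : R, 0 <= x -> 0 <= y -> 0 <= l <= 1 ->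
         Phi (l * x + (1 - l) * y) <= l * Phi x + (1 - l) * Phi y.

Let Dq t h := (Phi (t + h) - Phi t) / h.

Lemma Dq_nd t h1 h2 : 0 <= t -> 0 < h1 -> h1 <= h2 -> Dq t h1 <= Dq t h2.
Proof.
move=> t0 h10; rewrite le_eqVlt => /orP[/eqP<-//|h12].
rewrite /Dq ler_pdivrMr; last lra.
rewrite mulrAC ler_pdivlMr //.
have := @cvx3 _ _ cvx _ _ _ t0 (ltac:(lra) : t < t + h1) (ltac:(lra) : t + h1 < t + h2).
have -> : t + h2 - (t + h1) = h2 - h1 by ring.
have -> : t + h1 - t = h1 by ring.
nra.
lra.
Qed.

Lemma Dq_lb s t h : 0 <= s -> s < t -> 0 < h -> (Phi t - Phi s) / (t - s) <= Dq t h.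
Proof.
move=> s0 st h0; rewrite /Dq ler_pdivrMr; last lra.
rewrite mulrAC ler_pdivlMr //.
have := @cvx3 _ _ cvx _ _ _ s0 st (ltac:(lra) : t < t + h).
have -> : t + h - t = h by ring.
nra.
Qed.

Lemma rderiv_cvg t : 0 < t -> cvg (Dq t h @[h --> 0^'+]).
Proof.
move=> t0; apply: nondecreasing_at_right_is_cvgr.
  near=> x => h1 h2; rewrite !in_itv /= => /andP[h10 _] /andP[h20 _] h12.
  exact: Dq_nd (ltW t0) h10 h12.
near=> x; exists ((Phi t - Phi 0) / (t - 0)) => y [h] /= ; rewrite in_itv /= => /andP[h0 _] <-.
exact: Dq_lb.
Unshelve. all: by end_near. Qed.

Lemma rderiv_ge s t : 0 <= s -> s < t -> (Phi t - Phi s) / (t - s) <= rderiv Phi t.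
Proof.
move=> s0 st; have t0 : 0 < t by lra.
apply: limr_ge; first exact: rderiv_cvg.
near=> h; apply: Dq_lb => //; near: h; exact: nbhs_right_gt.
Unshelve. all: by end_near. Qed.

Lemma rderiv_le t u : 0 < t -> t < u -> rderiv Phi t <= (Phi u - Phi t) / (u - t).
Proof.
move=> t0 tu.
rewrite {1}(_ : u = t + (u - t)); last by ring.
change (rderiv Phi t <= Dq t (u - t)).
apply: limr_le; first exact: rderiv_cvg.
near=> h; apply: Dq_nd; [lra| |].
  by near: h; exact: nbhs_right_gt.
apply: ltW; near: h; apply: nbhs_right_lt; lra.
Unshelve. all: by end_near. Qed.
End A2.
Section B.
Context (R : realType).

Lemma bern (e : R) n : 0 <= e <= 1 -> 1 - n%:R * e <= (1 - e) ^+ n.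
Proof.
move=> /andP[e0 e1]; elim: n => [|n IH]; first by rewrite mul0r subr0 expr0.
rewrite exprS -natr1.
have hn : 0 <= n%:R :> R by [].
have hX : 0 <= (1 - e) ^+ n by rewrite exprn_ge0 //; lra.
nra.
Qed.

Lemma bern2 (x : R) n : 0 <= x -> 1 + n%:R * x <= (1 + x) ^+ n.
Proof.
move=> x0; elim: n => [|n IH]; first by rewrite mul0r addr0 expr0.
rewrite exprS -natr1.
have hn : 0 <= n%:R :> R by [].
nra.
Qed.

Lemma mono_gen (H : R -> R) (K : R) : 0 <= K -> (forall x, 0 < x -> 0 <= H x) ->
  (forall x y, 0 < x -> x < y -> H y * (1 - K * (y / x - 1) ^+ 2) <= H x) ->
  forall x y, 0 < x -> x <= y -> H y <= H x.
Proof.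
move=> K0 H0 Hstep x y x0; rewrite le_eqVlt => /orP[/eqP->//|xy].
rewrite leNgt; apply/negP => Hlt.
have y0 : 0 < y by lra.
have Hx0 := H0 _ x0.
have yx1 : 1 < y / x by rewrite ltr_pdivlMr // mul1r.
set w := y / x - 1.
have w0 : 0 < w by rewrite /w; lra.
have Hd : 0 < H y - H x by lra.
set A := H y * K * w ^+ 2.
have A0 : 0 <= A by rewrite /A !mulr_ge0 // ?exprn_ge0 //; lra.
set M := K * w ^+ 2 + A / (H y - H x) + 1.
set n := (Num.trunc M).+1.
have nM : M < n%:R := truncnS_gt M.
have Kw0 : 0 <= K * w ^+ 2 by rewrite mulr_ge0 // exprn_ge0 //; lra.
have Ad0 : 0 <= A / (H y - H x) by rewrite divr_ge0 //; lra.
have nK : K * w ^+ 2 < n%:R by rewrite /M in nM; lra.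
have nA : A / (H y - H x) < n%:R by rewrite /M in nM; lra.
have n1 : 1 <= n%:R :> R by rewrite /M in nM; lra.
have n0 : (0 < n)%N by [].
have nR0 : 0 < n%:R :> R by lra.
set r := (y / x) `^ (n%:R^-1).
have rn : r ^+ n = y / x.
  rewrite /r -powR_mulrn ?powR_ge0 // -powRrM mulVf ?powRr1 //; first lra.
  by rewrite gt_eqF.
have r0 : 0 <= r by exact: powR_ge0.
have r1 : 1 < r.
  rewrite ltNge; apply/negP => r1; have := exprn_ile1 n r0 r1; rewrite rn; lra.
have rw : r - 1 <= w / n%:R.
  have wn0 : 0 <= w / n%:R by rewrite divr_ge0 //; lra.
  suff : r <= 1 + w / n%:R by lra.
  rewrite -(ler_pXn2r n0) ?nnegrE //; last lra.
  rewrite rn; apply: (@le_trans _ _ (1 + n%:R * (w / n%:R))); last exact: bern2.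
  rewrite [n%:R * _]mulrC divfK; last lra.
  rewrite /w; lra.
set e := K * (r - 1) ^+ 2.
have e0 : 0 <= e by rewrite /e mulr_ge0 // exprn_ge0 //; lra.
have en : n%:R * e <= K * w ^+ 2 / n%:R.
  have h1 : (r - 1) ^+ 2 <= (w / n%:R) ^+ 2.
    rewrite ler_pXn2r ?nnegrE //; try lra.
  rewrite /e.
  have -> : K * w ^+ 2 / n%:R = n%:R * (K * ((w / n%:R) ^+ 2)).
    by rewrite expr_div_n expr2; field; lra.
  by rewrite ler_pM2l //; apply: ler_wpM2l.
have e1 : e <= 1.
  have : K * w ^+ 2 / n%:R < 1 by rewrite ltr_pdivrMr // mul1r.
  have : e <= n%:R * e by rewrite ler_peMl.
  lra.
have claim : forall k, H (x * r ^+ k) * (1 - e) ^+ k <= H x.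
  elim => [|k IH]; first by rewrite !expr0 !mulr1.
  have xk0 : 0 < x * r ^+ k by rewrite mulr_gt0 // exprn_gt0 //; lra.
  have xkk : x * r ^+ k < x * r ^+ k.+1.
    by rewrite exprS mulrCA ltr_pMl //.
  have := Hstep _ _ xk0 xkk.
  have -> : x * r ^+ k.+1 / (x * r ^+ k) - 1 = r - 1.
    rewrite exprS; field; apply/andP; split; rewrite ?expf_neq0 //; lra.
  move=> Hs.
  have hk : 0 <= (1 - e) ^+ k by rewrite exprn_ge0 //; lra.
  apply: le_trans IH.
  rewrite [(1 - e) ^+ k.+1]exprSr mulrCA [X in _ <= X]mulrC; apply: ler_wpM2l => //.
have := claim n; rewrite rn [x * _]mulrC divfK; last lra.
move=> Hn.
have := @bern e n (ltac:(apply/andP; split => //)).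
move=> B1.
have Hy0 : 0 <= H y by lra.
have h2 : H y * (1 - K * w ^+ 2 / n%:R) <= H x.
  apply: le_trans Hn; apply: ler_wpM2l => //; lra.
have h3 : A < n%:R * (H y - H x) by rewrite -ltr_pdivrMr.
have : H y * (1 - K * w ^+ 2 / n%:R) * n%:R <= H x * n%:R by rewrite ler_pM2r.
have -> : H y * (1 - K * w ^+ 2 / n%:R) * n%:R = H y * n%:R - A.
  by rewrite /A; field; lra.
nra.
Qed.
End B.
Section C.
Context (R : realType).

Lemma ln_ge (z : R) : 0 < z -> 1 - z^-1 <= ln z.
Proof.
move=> z0; have := expR_ge1Dx (ln (z^-1)).
rewrite lnK ?posrE ?invr_gt0 // lnV ?posrE //; lra.
Qed.

Lemma powR_ge_lin (z P : R) : 0 < z -> 0 <= P -> 1 + P * (1 - z^-1) <= z `^ P.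
Proof.
move=> z0 P0; rewrite /powR gt_eqF //.
apply: le_trans (expR_ge1Dx _).
rewrite lerD2l; apply: ler_wpM2l => //; exact: ln_ge.
Qed.

Variable Psi : R -> R.
Hypothesis yPsi : young_function Psi.

Lemma young_cvx : forall x y l : R, 0 <= x -> 0 <= y -> 0 <= l <= 1 ->
         Psi (l * x + (1 - l) * y) <= l * Psi x + (1 - l) * Psi y.
Proof. by case: yPsi. Qed.
Lemma young_ge0 t : 0 <= t -> 0 <= Psi t.
Proof. by case: yPsi => _ h _ _ _; apply: h. Qed.
Lemma young_gt0 t : 0 < t -> 0 < Psi t.
Proof. by case: yPsi => _ _ _ h _; apply: h. Qed.
Lemma young0 : Psi 0 = 0.
Proof. by case: yPsi. Qed.

Lemma pow_upper (P : R) : 0 <= P -> (forall t, 0 < t -> young_ratio Psi t <= P) ->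
  forall x y, 0 < x -> x <= y -> Psi y / y `^ P <= Psi x / x `^ P.
Proof.
move=> P0 hr; apply: (@mono_gen _ _ (P ^+ 2)); first exact: exprn_ge0.
  by move=> x x0; rewrite divr_ge0 ?powR_ge0 //; apply: young_ge0; exact: ltW.
move=> s t s0 st.
have t0 : 0 < t by lra.
have Pt := young_gt0 _ t0; have Ps := young_ge0 _ (ltW s0).
have hd := @rderiv_ge _ _ young_cvx _ _ (ltW s0) st.
have := hr _ t0; rewrite /young_ratio ler_pdivrMr // => hr'.
set r := rderiv Psi t in hd hr'.
have hs : Psi t * (1 - P * ((t - s) / t)) <= Psi s.
  have ts0 : 0 < t - s by rewrite subr_gt0.
  have h1 : Psi t - Psi s <= r * (t - s) by rewrite -ler_pdivrMr.
  have h2 : r * (t - s) <= (P * Psi t / t) * (t - s).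
    rewrite ler_pM2r // ler_pdivlMr // mulrC //.
  have -> : Psi t * (1 - P * ((t - s) / t)) = Psi t - (P * Psi t / t) * (t - s).
    by field; rewrite gt_eqF.
  move: h1 h2; set X := r * (t - s); set Y := P * Psi t / t * (t - s); lra.
set v := (t - s) / t.
set w := t / s - 1.
have v0 : 0 <= v by rewrite /v divr_ge0; lra.
have vw : v <= w.
  rewrite /v /w (_ : t / s - 1 = (t - s) / s); last by field; lra.
  rewrite ler_pdivrMr // mulrAC ler_pdivlMr //; nra.
have ha : 1 + P * v <= (t / s) `^ P.
  have := @powR_ge_lin (t / s) P (ltac:(rewrite divr_gt0 //; lra) : 0 < t / s) P0.
  by rewrite invf_div (_ : 1 - s / t = v) //; rewrite /v; field; lra.
set a := (t / s) `^ P in ha.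
have tP : t `^ P = a * s `^ P.
  by rewrite /a -powRM ?divfK ?gt_eqF ?divr_ge0 ?ltW.
have sP : 0 < s `^ P by exact: powR_gt0.
have a0 : 0 < a by nra.
rewrite tP.
have -> : Psi t / (a * s `^ P) * (1 - P ^+ 2 * w ^+ 2) =
    (Psi t * (1 - P ^+ 2 * w ^+ 2) / a) / s `^ P.
  by field; rewrite !gt_eqF.
rewrite ler_pM2r ?invr_gt0 // ler_pdivrMr //.
have key : Psi t * (1 - P ^+ 2 * w ^+ 2) <= Psi s * a.
  have e2 : P * v <= P * w by rewrite ler_wpM2l.
  have Pv0 : 0 <= P * v by rewrite mulr_ge0.
  have sq : (P * v) ^+ 2 <= (P * w) ^+ 2 by rewrite ler_pXn2r ?nnegrE //; lra.
  rewrite -exprMn.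
  have [hp|hn] := lerP 0 (1 - P * v).
    have e1 : Psi t * (1 - P * v) * (1 + P * v) <= Psi s * a.
      apply: (@le_trans _ _ (Psi s * (1 + P * v))).
        by apply: ler_wpM2r => //; lra.
      exact: ler_wpM2l.
    apply: le_trans e1; rewrite -mulrA; apply: ler_wpM2l; first exact: ltW.
    rewrite expr2 in sq *; lra.
  have hneg : 1 - (P * w) ^+ 2 <= 0.
    have : 1 <= (P * w) ^+ 2.
      rewrite -(expr1n _ 2) ler_pXn2r ?nnegrE //; lra.
    lra.
  apply: (@le_trans _ _ 0); last by rewrite mulr_ge0 // ltW.
  by rewrite mulr_ge0_le0 // ltW.
exact: key.
Qed.
End C.
Section C2.
Context (R : realType).
Variable Psi : R -> R.
Hypothesis yPsi : young_function Psi.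

Lemma step_lower (Q : R) : 0 <= Q -> (forall t, 0 < t -> Q <= young_ratio Psi t) ->
  forall t u, 0 < t -> t < u ->
  Psi t / t `^ Q * (1 - Q ^+ 2 * (u / t - 1) ^+ 2) <= Psi u / u `^ Q.
Proof.
move=> Q0 hr t u t0 tu.
have u0 : 0 < u by lra.
have Pt := @young_gt0 _ _ yPsi _ t0; have Pu := @young_gt0 _ _ yPsi _ u0.
have hd := @rderiv_le _ _ (@young_cvx _ _ yPsi) _ _ t0 tu.
have := hr _ t0; rewrite /young_ratio ler_pdivlMr // => hr'.
set r := rderiv Psi t in hd hr'.
set w := u / t - 1.
have w0 : 0 <= w.
  rewrite /w subr_ge0 ler_pdivlMr // mul1r; lra.
have hs : Psi t * (1 + Q * w) <= Psi u.
  have ut0 : 0 < u - t by rewrite subr_gt0.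
  have h1 : r * (u - t) <= Psi u - Psi t by rewrite -ler_pdivlMr.
  have h2 : (Q * Psi t / t) * (u - t) <= r * (u - t).
    by rewrite ler_pM2r // ler_pdivrMr // [r * t]mulrC.
  rewrite (_ : Psi t * (1 + Q * w) = Psi t + (Q * Psi t / t) * (u - t)); last first.
    by rewrite /w; field; rewrite gt_eqF.
  move: h1 h2; set X := r * (u - t); set Y := Q * Psi t / t * (u - t); lra.
have hb : 1 - Q * w <= (t / u) `^ Q.
  have := @powR_ge_lin _ (t / u) Q (ltac:(rewrite divr_gt0 //) : 0 < t / u) Q0.
  by rewrite invf_div /w; lra.
set b := (t / u) `^ Q in hb.
have tQ : t `^ Q = b * u `^ Q.
  by rewrite /b -powRM ?divfK ?gt_eqF ?divr_ge0 ?ltW.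
have uQ : 0 < u `^ Q by exact: powR_gt0.
have b0 : 0 < b by exact: powR_gt0 (divr_gt0 t0 u0).
rewrite tQ.
have -> : Psi t / (b * u `^ Q) * (1 - Q ^+ 2 * w ^+ 2) =
    (Psi t * (1 - Q ^+ 2 * w ^+ 2) / b) / u `^ Q.
  by field; rewrite !gt_eqF.
rewrite ler_pM2r ?invr_gt0 // ler_pdivrMr //.
have Qw0 : 0 <= Q * w by rewrite mulr_ge0.
rewrite -exprMn.
have [hp|hn] := lerP 0 (1 - Q * w).
  have e1 : Psi t * (1 + Q * w) * (1 - Q * w) <= Psi u * b.
    apply: (@le_trans _ _ (Psi u * (1 - Q * w))).
      exact: ler_wpM2r.
    apply: ler_wpM2l => //; exact: ltW.
  apply: le_trans e1; rewrite -mulrA; apply: ler_wpM2l; first exact: ltW.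
  rewrite expr2; lra.
have hneg : 1 - (Q * w) ^+ 2 <= 0.
  have : 1 <= (Q * w) ^+ 2.
    rewrite -(expr1n _ 2) ler_pXn2r ?nnegrE //; lra.
  lra.
apply: (@le_trans _ _ 0); last by rewrite mulr_ge0 // ltW.
by rewrite mulr_ge0_le0 // ltW.
Qed.

Lemma pow_lower (Q : R) : 0 <= Q -> (forall t, 0 < t -> Q <= young_ratio Psi t) ->
  forall x y, 0 < x -> x <= y -> Psi x / x `^ Q <= Psi y / y `^ Q.
Proof.
move=> Q0 hr x y x0 xy.
have y0 : 0 < y by lra.
have := @mono_gen _ (fun z => Psi z^-1 / z^-1 `^ Q) (Q ^+ 2) (exprn_ge0 _ Q0) _ _ y^-1 x^-1.
rewrite !invrK; apply; rewrite ?invr_gt0 //.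
- by move=> z z0; rewrite divr_ge0 ?powR_ge0 //; apply: (@young_ge0 _ _ yPsi); rewrite ltW // invr_gt0.
- move=> z1 z2 z10 z12 /=.
  have := @step_lower Q Q0 hr z2^-1 z1^-1 (ltac:(rewrite invr_gt0; lra)).
  rewrite (_ : z1^-1 / z2^-1 = z2 / z1); last by field; apply/andP; split; rewrite gt_eqF //; lra.
  apply; rewrite ltf_pV2 ?posrE //; lra.
- by rewrite lef_pV2 ?posrE.
Qed.
End C2.
Section E.
Context (R : realType) (Phi : R -> R).
Hypothesis yPhi : young_function Phi.
Local Open Scope ereal_scope.

Lemma extract_p (p : R) : p_class Phi < p%:E ->
  exists Psi, [/\ young_function Psi, young_equiv Phi Psi &
     forall t, (0 < t)%R -> (young_ratio Psi t <= p)%R].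
Proof.
move=> /ereal_inf_lt[_ [Psi [yP eP] <-] hlt].
exists Psi; split => // t t0; rewrite -lee_fin; apply: le_trans (ltW hlt).
by apply: ereal_sup_ubound; exists t.
Qed.

Lemma extract_q (q : R) : q%:E < q_class Phi ->
  exists Psi, [/\ young_function Psi, young_equiv Phi Psi &
     forall t, (0 < t)%R -> (q <= young_ratio Psi t)%R].
Proof.
move=> /ereal_sup_gt[_ [Psi [yP eP] <-] hlt].
exists Psi; split => // t t0; rewrite -lee_fin; apply: le_trans (ltW hlt) _.
by apply: ereal_inf_lbound; exists t.
Qed.
Local Close Scope ereal_scope.

Lemma phi_bounds (p q : R) : 0 < p -> 0 < q ->
  (p_class Phi < p%:E)%E -> (q%:E < q_class Phi)%E ->
  exists A B : R, [/\ 0 <= A, 0 <= B,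
    (forall t, 0 <= t -> Phi t <= A * (t `^ p + t `^ q)),
    (forall t, 0 <= t <= 1 -> t `^ p <= B * Phi t) &
    (forall t, 1 <= t -> t `^ q <= B * Phi t)].
Proof.
move=> p0 q0 /extract_p[Psi1 [yP1 [C1 [C11 hC1]] r1]] /extract_q[Psi2 [yP2 [C2 [C21 hC2]] r2]].
have P11 : 0 < Psi1 1 by apply: (@young_gt0 _ _ yP1).
have P21 : 0 < Psi2 1 by apply: (@young_gt0 _ _ yP2).
have C10 : 0 < C1 by lra.
have C20 : 0 < C2 by lra.
have up1 := @pow_upper _ _ yP1 p (ltW p0) r1.
have lo2 := @pow_lower _ _ yP2 q (ltW q0) r2.
have Phi0 : Phi 0 = 0 by apply: young0.
have Phige0 t : 0 <= t -> 0 <= Phi t by apply: young_ge0.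
have hPsi1 t : 0 <= t -> Psi1 t <= C1 * Phi t.
  move=> t0; have [h _] := hC1 t t0.
  by rewrite -ler_pdivrMl // mulrC.
have hPsi2 t : 0 <= t -> Psi2 t <= C2 * Phi t.
  move=> t0; have [h _] := hC2 t t0.
  by rewrite -ler_pdivrMl // mulrC.
have A0 : 0 <= C1 * Psi1 1 + C2 * Psi2 1 by rewrite addr_ge0 // mulr_ge0 // ltW.
have B0 : 0 <= C1 / Psi1 1 + C2 / Psi2 1 by rewrite addr_ge0 // divr_ge0 // ltW.
exists (C1 * Psi1 1 + C2 * Psi2 1), (C1 / Psi1 1 + C2 / Psi2 1); split => //.
- move=> t; rewrite le_eqVlt => /orP[/eqP<-|t0].
    by rewrite Phi0 mulr_ge0 // addr_ge0 // powR_ge0.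
  have tp := powR_ge0 t p; have tq := powR_ge0 t q.
  have tp0 : 0 < t `^ p by apply: powR_gt0.
  have tq0 : 0 < t `^ q by apply: powR_gt0.
  have [t1|t1] := lerP 1 t.
    have := up1 1 t ltr01 t1; rewrite powR1 /= divr1 ler_pdivrMr // => h.
    have [_ h2] := hC1 t (ltW t0).
    have h3 : C1 * Psi1 t <= C1 * (Psi1 1 * t `^ p) by rewrite ler_pM2l.
    have h4 : 0 <= C2 * Psi2 1 * t `^ q by rewrite !mulr_ge0 // ltW.
    nra.
  have := lo2 t 1 t0 (ltW t1); rewrite powR1 /= divr1 ler_pdivrMr // => h.
  have [_ h2] := hC2 t (ltW t0).
  have h3 : C2 * Psi2 t <= C2 * (Psi2 1 * t `^ q) by rewrite ler_pM2l.
  have h4 : 0 <= C1 * Psi1 1 * t `^ p by rewrite !mulr_ge0 // ltW.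
  nra.
- move=> t /andP[]; rewrite le_eqVlt => /orP[/eqP<-|t0] t1.
    by rewrite powR0 ?gt_eqF // mulr_ge0 // ?Phige0.
  have tp0 : 0 < t `^ p by apply: powR_gt0.
  have := up1 t 1 t0 t1; rewrite powR1 /= divr1 ler_pdivlMr // => h.
  have h2 := hPsi1 t (ltW t0).
  have h5 : 0 <= C2 / Psi2 1 * Phi t by rewrite mulr_ge0 ?divr_ge0 ?Phige0 // ltW.
  have : t `^ p <= C1 / Psi1 1 * Phi t.
    by rewrite mulrAC ler_pdivlMr // mulrC; lra.
  rewrite mulrDl; lra.
- move=> t t1; have t0 : 0 < t by lra.
  have tq0 : 0 < t `^ q by apply: powR_gt0.
  have := lo2 1 t ltr01 t1; rewrite powR1 /= divr1 ler_pdivlMr // => h.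
  have h2 := hPsi2 t (ltW t0).
  have h5 : 0 <= C1 / Psi1 1 * Phi t by rewrite mulr_ge0 ?divr_ge0 ?Phige0 // ltW.
  have : t `^ q <= C2 / Psi2 1 * Phi t.
    by rewrite mulrAC ler_pdivlMr // mulrC; lra.
  rewrite mulrDl; lra.
Qed.
End E.
Section F.
Context (R : realType) (d : measure_display) (T : measurableType d).
Variable mu : {measure set T -> \bar R}.
Variable Phi : R -> R.
Hypothesis yPhi : young_function Phi.

Lemma Phi_nd x y : 0 <= x -> x <= y -> Phi x <= Phi y.
Proof.
move=> x0; rewrite le_eqVlt => /orP[/eqP->//|xy].
have y0 : 0 < y by lra.
set l := x / y.
have l0 : 0 <= l by rewrite divr_ge0 // ltW.
have l1 : l <= 1 by rewrite ler_pdivrMr // mul1r ltW.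
have := @young_cvx _ _ yPhi y 0 l (ltW y0) (lexx _) (ltac:(apply/andP; split => //)).
rewrite mulr0 addr0 young0 // mulr0 addr0 /l divfK ?gt_eqF // => h.
apply: le_trans h _.
have := @young_ge0 _ _ yPhi y (ltW y0); rewrite -/l => hy.
nra.
Qed.

Lemma measurable_Phi_abs (g : T -> R) : measurable_fun setT g ->
  measurable_fun setT (fun x => (Phi `|g x|)%:E).
Proof.
move=> mg; apply/measurable_EFinP.
have -> : (fun x => Phi `|g x|) = ((fun z => Phi (Num.max z 0)) \o (fun z : R => `|z|)) \o g.
  by apply: funext => x /=; rewrite max_l.
apply: measurableT_comp mg; apply: measurableT_comp; last exact: normr_measurable.
apply: nondecreasing_measurable => // x y xy.
by apply: Phi_nd; rewrite ?ge_max !le_max ?xy ?lexx !orbT.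
Qed.

Lemma measurable_powabs (g : T -> R) (p : R) : measurable_fun setT g ->
  measurable_fun setT (fun x => (`|g x| `^ p)%:E).
Proof.
move=> mg; apply/measurable_EFinP.
exact: (measurableT_comp (measurable_powR p) (measurableT_comp (@normr_measurable R setT) mg)).
Qed.

Lemma Lp_of_bound (g F : T -> R) (p c : R) : measurable_fun setT g ->
  measurable_fun setT (fun x => (F x)%:E) -> (forall x, 0 <= F x) -> 0 <= c ->
  (forall x, `|g x| `^ p <= c * F x) -> (\int[mu]_x (F x)%:E <= 1)%E ->
  Lp_space mu p g.
Proof.
move=> mg mF F0 c0 hb hI; split => //.
apply: (@le_lt_trans _ _ (c%:E * \int[mu]_x (F x)%:E)%E).
  rewrite -ge0_integralZl //; last by move=> x _; rewrite lee_fin.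
  apply: ge0_le_integral.
  - exact: measurableT.
  - by move=> x _; rewrite lee_fin powR_ge0.
  - exact: measurable_powabs.
  - under eq_fun do rewrite -EFinM.
    apply/measurable_EFinP; apply: measurable_funM; [exact: measurable_cst|exact/measurable_EFinP].
  - by move=> x _; rewrite -EFinM lee_fin.
apply: (@le_lt_trans _ _ (c%:E * 1)%E); last by rewrite mule1 ltry.
by apply: lee_wpmul2l; rewrite ?lee_fin.
Qed.
End F.
Section F2.
Context (R : realType) (d : measure_display) (T : measurableType d).
Variable mu : {measure set T -> \bar R}.
Variable Phi : R -> R.
Hypothesis yPhi : young_function Phi.

Lemma div_pow_le (z l r : R) : 0 <= z -> 1 <= l -> 1 <= r -> (z / l) `^ r <= z `^ r / l.
Proof.
move=> z0 l1 r1; have l0 : 0 < l by lra.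
have e : (z / l) `^ r * l `^ r = z `^ r.
  rewrite -powRM; [by rewrite divfK // gt_eqF | exact: divr_ge0 z0 (ltW l0) | exact: ltW].
have lr : l <= l `^ r.
  by rewrite -{1}(powRr1 (ltW l0)); apply: ler_powR.
rewrite ler_pdivlMr // -e; apply: ler_wpM2l => //; exact: powR_ge0.
Qed.

Lemma incl1 (p q A : R) : 1 <= p -> 1 <= q -> 0 <= A ->
  (forall t, 0 <= t -> Phi t <= A * (t `^ p + t `^ q)) ->
  Lp_space mu p `&` Lp_space mu q `<=` orlicz_space mu Phi.
Proof.
move=> p1 q1 A0 hA f [[mf Ip] [_ Iq]]; split => //.
set Jp := (\int[mu]_x (`|f x| `^ p)%:E)%E in Ip.
set Jq := (\int[mu]_x (`|f x| `^ q)%:E)%E in Iq.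
have Jp0 : (0 <= Jp)%E by apply: integral_ge0 => x _; rewrite lee_fin powR_ge0.
have Jq0 : (0 <= Jq)%E by apply: integral_ge0 => x _; rewrite lee_fin powR_ge0.
have Jpf : Jp \is a fin_num by rewrite ge0_fin_numE.
have Jqf : Jq \is a fin_num by rewrite ge0_fin_numE.
have a0 : 0 <= fine Jp by rewrite fine_ge0.
have b0 : 0 <= fine Jq by rewrite fine_ge0.
set lam := 1 + A * (fine Jp + fine Jq).
have lam1 : 1 <= lam by rewrite /lam lerDl mulr_ge0 // addr_ge0.
have lam0 : 0 < lam by lra.
apply: (@le_lt_trans _ _ lam%:E); last exact: ltry.
apply: ereal_inf_le; exists lam%:E => //; exists lam => //; split => //.
rewrite /modular.
have mpq : measurable_fun setT (fun x => (`|f x| `^ p)%:E + (`|f x| `^ q)%:E)%E.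
  by apply: emeasurable_funD; apply: measurable_powabs.
apply: (@le_trans _ _ (\int[mu]_x ((A / lam)%:E * ((`|f x| `^ p)%:E + (`|f x| `^ q)%:E)))%E).
  apply: ge0_le_integral.
  - exact: measurableT.
  - by move=> x _; rewrite lee_fin; apply: young_ge0.
  - apply: measurable_Phi_abs => //; apply: measurable_funM => //; exact: measurable_cst.
  - under eq_fun do rewrite -EFinD -EFinM.
    apply/measurable_EFinP; apply: measurable_funM; first exact: measurable_cst.
    apply: measurable_funD; apply/measurable_EFinP; exact: measurable_powabs.
  - move=> x _; rewrite -EFinD -EFinM lee_fin.

    have -> : `|f x / lam| = `|f x| / lam.
      by rewrite normrM normfV (gtr0_norm lam0).
    apply: (@le_trans _ _ _ _ _ (hA _ (divr_ge0 (normr_ge0 (f x)) (ltW lam0)))).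
    rewrite -mulrA ler_wpM2l // mulrDr !(mulrC lam^-1).
    by apply: lerD; apply: div_pow_le.
rewrite ge0_integralZl //; last 2 first.
  - by move=> x _; rewrite adde_ge0 // lee_fin powR_ge0.
  - by rewrite lee_fin divr_ge0 // ltW.
rewrite ge0_integralD //; [|exact: measurable_powabs|exact: measurable_powabs].
have eJp : (\int[mu]_x (`|f x| `^ p)%:E = (fine Jp)%:E)%E by rewrite fineK.
have eJq : (\int[mu]_x (`|f x| `^ q)%:E = (fine Jq)%:E)%E by rewrite fineK.
rewrite eJp eJq -EFinD -EFinM lee_fin.
rewrite mulrAC ler_pdivrMr // mul1r /lam; lra.
Qed.

Lemma incl2 (p q B : R) : 0 < p -> 0 < q -> 0 <= B ->
  (forall t, 0 <= t <= 1 -> t `^ p <= B * Phi t) ->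
  (forall t, 1 <= t -> t `^ q <= B * Phi t) ->
  orlicz_space mu Phi `<=` Lp_sum mu p q.
Proof.
move=> p0 q0 B0 hp hq f [mf hf].
have [lam [lam0 hlam]] : exists lam, 0 < lam /\ (modular mu Phi (fun x => (f x / lam)%R) <= 1)%E.
  by move/ereal_inf_lt : hf => [_ [lam hlam <-] _]; exists lam.
move: hlam; rewrite /modular => hlam.
have mF : measurable_fun setT (fun x => (Phi `|f x / lam|)%:E).
  apply: measurable_Phi_abs => //; apply: measurable_funM => //; exact: measurable_cst.
have F0 x : 0 <= Phi `|f x / lam| by apply: young_ge0.
have nfl x : `|f x / lam| = `|f x| / lam by rewrite normrM normfV (gtr0_norm lam0).
have nfl' x : `|f x| = `|f x / lam| * lam by rewrite nfl divfK ?gt_eqF.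
have mc : measurable_fun setT (fun x => `|f x| <= lam).
  apply: measurable_fun_ler; last exact: measurable_cst.
  exact: measurableT_comp (@normr_measurable R setT) mf.
exists (fun x => if `|f x| <= lam then f x else 0), (fun x => if `|f x| <= lam then 0 else f x).
split; [|split].
- apply: (@Lp_of_bound _ _ _ mu _ (fun x => Phi `|f x / lam|) p (lam `^ p * B)) => //.
  + by apply: measurable_fun_ifT => //; exact: measurable_cst.
  + by rewrite mulr_ge0 // powR_ge0.
  + move=> x; case: ifPn => fl.
      rewrite nfl' (powRM _ (normr_ge0 _) (ltW lam0)) mulrC -mulrA.
      apply: ler_wpM2l; first exact: powR_ge0.
      apply: hp; rewrite normr_ge0 nfl ler_pdivrMr // mul1r //.
    by rewrite normr0 powR0 ?gt_eqF // mulr_ge0 // mulr_ge0 // powR_ge0.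
- apply: (@Lp_of_bound _ _ _ mu _ (fun x => Phi `|f x / lam|) q (lam `^ q * B)) => //.
  + by apply: measurable_fun_ifT => //; exact: measurable_cst.
  + by rewrite mulr_ge0 // powR_ge0.
  + move=> x; case: ifPn => fl.
      by rewrite normr0 powR0 ?gt_eqF // mulr_ge0 // mulr_ge0 // powR_ge0.
    rewrite nfl' (powRM _ (normr_ge0 _) (ltW lam0)) mulrC -mulrA.
    apply: ler_wpM2l; first exact: powR_ge0.
    apply: hq; rewrite nfl ler_pdivlMr // mul1r; rewrite -ltNge in fl; exact: ltW.
- apply: aeW => x /=; case: ifPn => _; by rewrite ?addr0 ?add0r.
Qed.
End F2.
Theorem mainTheorem13 (R : realType) (d : nat) (Phi : R -> R) :
  (1 <= d)%N ->
  young_function Phi ->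
  cvg (young_ratio Phi t @[t --> 0^'+]) ->
  cvg (young_ratio Phi t @[t --> +oo]) ->
  (1%:E < q_class Phi)%E ->
  (q_class Phi <= p_class Phi)%E ->
  (p_class Phi < +oo)%E ->
  forall p q : R, (p_class Phi < p%:E)%E -> 1 < q -> (q%:E < q_class Phi)%E ->
    (Lp_space (@lebd R d) p `&` Lp_space (@lebd R d) q
       `<=` orlicz_space (@lebd R d) Phi) /\
    (orlicz_space (@lebd R d) Phi `<=` Lp_sum (@lebd R d) p q).
Proof.
move=> _ yP _ _ _ hqp _ p q hp q1 hq.
have qp : q < p.
  rewrite -lte_fin; apply: (lt_le_trans hq); apply: (le_trans hqp); exact: ltW.
have [A [B [A0 B0 hA hBp hBq]]] := @phi_bounds _ _ yP p q (ltac:(lra)) (ltac:(lra)) hp hq.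
split.
- exact: (@incl1 R _ _ (ms_meas (lebRd R d.-1)) Phi yP p q A (ltac:(lra)) (ltac:(lra)) A0 hA).
- exact: (@incl2 R _ _ (ms_meas (lebRd R d.-1)) Phi yP p q B (ltac:(lra)) (ltac:(lra)) B0 hBp hBq).
Qed.
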